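(* For every state $x$, \[ \Psi_1(x) \le \Psi_0(x) + \sqrt{\Psi_0(x)\cdot\frac{n}{\bar s_h}} + \frac{n}{4}\left(\frac{1}{\bar s_h}-\frac{1}{\bar s_a}\right). \]
   Context: There are $n$ processors with speeds $s_i>0$, $\mathcal{S}=\sum_i s_i$, arithmetic mean $\bar s_a=\mathcal{S}/n$ and harmonic mean $\bar s_h=n/\sum_i (1/s_i)$. There are $m$ unit tasks; a state $x$ assigns each task to a processor and $w_i(x)$ is the number of tasks on processor $i$. $\Psi_0(x)=\sum_i (w_i(x)-m s_i/\mathcal{S})^2/s_i$ and $\Psi_1(x)=\sum_i \frac{w_i(x)(w_i(x)+1)}{s_i}-\frac{m^2}{\mathcal{S}}-\frac{mn}{\mathcal{S}}+\frac{n}{4}\left(\frac{1}{\bar s_h}-\frac{1}{\bar s_a}\right)$. *)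

(* Defs.v *)
From HB Require Import structures.
From mathcomp Require Import all_boot all_order all_algebra.
Set Implicit Arguments. Unset Strict Implicit. Unset Printing Implicit Defensive.
Import Order.TTheory GRing.Theory Num.Theory.
Local Open Scope ring_scope.

Section Defs.
Variables (R : rcfType) (n m : nat) (s : 'I_n -> R).

Definition Stot : R := \sum_(i < n) s i.
Definition s_a : R := Stot / n%:R.
Definition s_h : R := n%:R / (\sum_(i < n) (s i)^-1).

(* a state assigns each of the m unit tasks to one of the n processors *)
Definition load (x : {ffun 'I_m -> 'I_n}) (i : 'I_n) : nat :=
  #|[set t : 'I_m | x t == i]|.

Definition Psi0 (x : {ffun 'I_m -> 'I_n}) : R :=
  \sum_(i < n) ((load x i)%:R - m%:R * s i / Stot) ^+ 2 / s i.

Definition Psi1 (x : {ffun 'I_m -> 'I_n}) : R :=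
  \sum_(i < n) ((load x i)%:R * ((load x i)%:R + 1)) / s i
  - m%:R ^+ 2 / Stot - m%:R * n%:R / Stot
  + n%:R / 4 * (s_h^-1 - s_a^-1).
End Defs.

(* Main.v *)
Require Import Defs.
From HB Require Import structures.
From mathcomp Require Import all_boot all_order all_algebra.
From mathcomp Require Import ring lra.
Import Order.TTheory GRing.Theory Num.Theory.
Local Open Scope ring_scope.

Lemma sum_load (n m : nat) (x : {ffun 'I_m -> 'I_n}) :
  (\sum_(i < n) load x i)%N = m.
Proof.
rewrite -[RHS](card_ord m) -sum1_card (partition_big x xpredT) //=.
apply: eq_bigr => i _; rewrite /load -sum1_card; apply: eq_bigl => t.
by rewrite inE.
Qed.

Lemma cs (R : rcfType) (n : nat) (d s : 'I_n -> R) (hn : (0 < n)%N)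
  (hs : forall i, 0 < s i) :
  (\sum_(i < n) d i / s i) ^+ 2 <=
  (\sum_(i < n) d i ^+ 2 / s i) * (\sum_(i < n) (s i)^-1).
Proof.
set A := \sum_(i < n) d i ^+ 2 / s i; set B := \sum_(i < n) (s i)^-1;
set C := \sum_(i < n) d i / s i.
have hB : 0 < B.
  rewrite /B (bigD1 (Ordinal hn)) //=; apply: ltr_pwDl; first by rewrite invr_gt0.
  by apply: sumr_ge0 => i _; rewrite invr_ge0 ltW.
set t := C / B.
have H0 : 0 <= \sum_(i < n) (d i - t) ^+ 2 / s i.
  by apply: sumr_ge0 => i _; rewrite divr_ge0 // ?sqr_ge0 // ltW.
have E : \sum_(i < n) (d i - t) ^+ 2 / s i = A - 2 * t * C + t ^+ 2 * B.
  rewrite /A /C /B mulr_sumr mulr_sumr -sumrN -!big_split /=.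
  apply: eq_bigr => i _; ring.
rewrite E /t in H0.
have hB0 : B != 0 by rewrite gt_eqF.
have : 0 <= (A - C ^+ 2 / B) * B.
  apply: mulr_ge0; last exact: ltW.
  suff -> : A - C ^+ 2 / B = A - 2 * (C / B) * C + (C / B) ^+ 2 * B by [].
  by field.
have -> : (A - C ^+ 2 / B) * B = A * B - C ^+ 2 by field.
by rewrite subr_ge0.
Qed.

Theorem lemma26 (R : rcfType) (n m : nat) (s : 'I_n -> R)
  (hn : (0 < n)%N) (hs : forall i, 0 < s i) (x : {ffun 'I_m -> 'I_n}) :
  Psi1 s x <= Psi0 s x + Num.sqrt (Psi0 s x * (n%:R / s_h s))
              + n%:R / 4 * ((s_h s)^-1 - (s_a s)^-1).
Proof.
set K := n%:R / 4 * _.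
set w := fun i => (load x i)%:R : R.
set S := Stot s.
have hS : 0 < S.
  rewrite /S /Stot (bigD1 (Ordinal hn)) //=; apply: ltr_pwDl => //.
  by apply: sumr_ge0 => i _; rewrite ltW.
have hS0 : S != 0 by rewrite gt_eqF.
have hs0 : forall i, s i != 0 by move=> i; rewrite gt_eqF.
have hw : \sum_(i < n) w i = m%:R by rewrite /w -natr_sum sum_load.
have hB : n%:R / s_h s = \sum_(i < n) (s i)^-1.
  have hn0 : n%:R != 0 :> R by rewrite pnatr_eq0 -lt0n.
  by rewrite /s_h invf_div; field.
have P0 : Psi0 s x = \sum_(i < n) w i ^+ 2 / s i - m%:R ^+ 2 / S.
  rewrite /Psi0 -/S.
  have -> : \sum_(i < n) ((load x i)%:R - m%:R * s i / S) ^+ 2 / s i =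
    \sum_(i < n) (w i ^+ 2 / s i - (2 * m%:R / S) * w i + (m%:R ^+ 2 / S ^+ 2) * s i).
    by apply: eq_bigr => i _; rewrite /w; field; rewrite hs0 hS0.
  rewrite !big_split /= sumrN -!mulr_sumr hw -/(Stot s) -/S.
  by field.
have P1 : Psi1 s x = \sum_(i < n) w i ^+ 2 / s i + \sum_(i < n) w i / s i
            - m%:R ^+ 2 / S - m%:R * n%:R / S + K.
  rewrite /Psi1 -/S -/K -big_split /=.
  by congr (_ - _ - _ + _); apply: eq_bigr => i _; rewrite /w; field; rewrite hs0.
have hC : \sum_(i < n) (w i - m%:R * s i / S) / s i =
          \sum_(i < n) w i / s i - m%:R * n%:R / S.
  have -> : \sum_(i < n) (w i - m%:R * s i / S) / s i =
            \sum_(i < n) (w i / s i - m%:R / S).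
    by apply: eq_bigr => i _; field; rewrite hs0 hS0.
  rewrite big_split /= sumrN sumr_const card_ord -mulr_natr; field; by rewrite ?hS0.
have H := @cs R n (fun i => w i - m%:R * s i / S) s hn hs.
rewrite hC /= in H.
have P0' : Psi0 s x = \sum_(i < n) (w i - m%:R * s i / S) ^+ 2 / s i by [].
rewrite -P0' -hB in H.
set C := \sum_(i < n) w i / s i - m%:R * n%:R / S in H *.
have HC : C <= Num.sqrt (Psi0 s x * (n%:R / s_h s)).
  apply: le_trans (ler_norm C) _.
  rewrite -sqrtr_sqr.
  exact: ler_wsqrtr.
rewrite P1.
have : \sum_(i < n) w i ^+ 2 / s i + \sum_(i < n) w i / s i - m%:R ^+ 2 / S -
  m%:R * n%:R / S = Psi0 s x + C by rewrite P0 /C; ring.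
move=> ->.
lra.
Qed.
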